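(* Let $X,Y$ be random variables with $0\le Y\le 1$ and $X=E(Y\mid X)$. Then for every $\delta\in[0,\tfrac12)$, $$P(|Y-X|\ge1-\delta)\le\delta,$$ with equality if $X=\delta$ (constant) and $Y$ has the Bernoulli$(\delta)$ distribution. *)

(* Defs.v *)
From HB Require Import structures.
From mathcomp Require Import all_boot all_order all_algebra.
From mathcomp Require Import all_classical all_reals all_analysis.
Set Implicit Arguments. Unset Strict Implicit. Unset Printing Implicit Defensive.
Import Order.TTheory GRing.Theory Num.Theory.
Local Open Scope classical_set_scope.
Local Open Scope ring_scope.

(* [is_cond_exp_self P X Y] : X is a version of the conditional expectation
   E(Y | sigma(X)), i.e. X is integrable and, for every Borel set B,
   E[Y ; X \in B] = E[X ; X \in B].  (X is trivially sigma(X)-measurable.) *)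
Definition is_cond_exp_self d (T : measurableType d) (R : realType)
  (P : probability T R) (X Y : {RV P >-> R}) : Prop :=
  P.-integrable setT (EFin \o X) /\
  forall B : set R, measurable B ->
    (\int[P]_(t in X @^-1` B) (Y t)%:E = \int[P]_(t in X @^-1` B) (X t)%:E)%E.

(* Main.v *)
Require Import Defs.
From HB Require Import structures.
From mathcomp Require Import all_boot all_order all_algebra.
From mathcomp Require Import all_classical all_reals all_analysis.
From mathcomp Require Import lra measurable_realfun.
Import Order.TTheory GRing.Theory Num.Theory.
Local Open Scope classical_set_scope.
Local Open Scope ring_scope.

Lemma helper d (T : measurableType d) (R : realType) (P : probability T R)
  (f g : T -> R) (A B : set T) (δ : R) :
  measurable A -> measurable B -> A `<=` B ->
  P.-integrable B (EFin \o f) -> P.-integrable B (EFin \o g) ->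
  (forall t, B t -> f t + \1_A t - δ <= g t) ->
  (\int[P]_(t in B) (f t)%:E = \int[P]_(t in B) (g t)%:E)%E ->
  (P A <= δ%:E * P B)%E.
Proof.
move=> mA mB AB fi gi fg e.
have iA : P.-integrable B (EFin \o \1_A).
  by apply: (integrableS measurableT) => //; exact: integrable_indic.
have igf : P.-integrable B (EFin \o (fun t => g t - f t)).
  have := integrableB mB gi fi.
  by apply: eq_integrable => // t _.
have ic := finite_measure_integrable_cst P δ mB.
have h1 : (\int[P]_(t in B) (\1_A t)%:E <=
           \int[P]_(t in B) ((fun t => g t - f t) t + cst δ t)%:E)%E.
  apply: le_integral => //.
    by have := integrableD mB igf ic; apply: eq_integrable => // t _.
  move=> t; rewrite inE => Bt; rewrite lee_fin /=; have := fg t Bt; lra.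
rewrite integral_indic // setIidl // in h1.
rewrite (integralD_EFin mB igf ic) in h1.
rewrite (_ : \int[P]_(x in B) (EFin \o cst δ) x = δ%:E * P B)%E in h1; last first.
  by rewrite -integral_cst //; apply: eq_integral.
rewrite (_ : \int[P]_(x in B) (EFin \o (fun t => (g t - f t)%R)) x =
   \int[P]_(x in B) ((g x)%:E - (f x)%:E)%E)%E in h1; last first.
  by apply: eq_integral => t _; rewrite /= EFinB.
rewrite integralB_EFin // -e subee ?add0e // in h1.
exact: integrable_fin_num.
Qed.

Theorem lemma3p1 (d : measure_display) (T : measurableType d) (R : realType)
  (P : probability T R) :
  (forall (X Y : {RV P >-> R}),
      (forall t, 0 <= Y t <= 1) ->
      is_cond_exp_self X Y ->
      forall delta : R, 0 <= delta < 1 / 2 ->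
        (P [set t | (1 - delta <= `|Y t - X t|)%R] <= delta%:E)%E) /\
  (forall (X Y : {RV P >-> R}) (delta : R), 0 <= delta < 1 / 2 ->
      (forall t, X t = delta) ->
      P [set t | Y t = 1] = delta%:E ->
      P [set t | Y t = 0] = (1 - delta)%:E ->
      P [set t | (1 - delta <= `|Y t - X t|)%R] = delta%:E).
Proof.
have mE : forall (X Y : {RV P >-> R}) (δ : R),
    measurable [set t | (1 - δ <= `|Y t - X t|)%R].
  move=> X Y δ.
  have mf : measurable_fun setT (fun t => `|Y t - X t|).
    apply: measurableT_comp; first exact: normr_measurable.
    exact: measurable_funB.
  rewrite (_ : [set t | _] = (fun t => `|Y t - X t|) @^-1` `[1 - δ, +oo[); last first.
    by apply/seteqP; split => t /=; rewrite in_itv /= andbT.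
  by rewrite -[_ @^-1` _]setTI; apply: mf => //; exact: measurable_itv.
split.
- move=> X Y Y01 [Xi hXY] δ /andP[d0 d12].
  set A := [set t | _].
  have mA : measurable A by exact: mE.
  pose B1 := X @^-1` `]-oo, δ].
  pose B2 := X @^-1` `[1 - δ, +oo[.
  have mB1 : measurable B1 by apply: measurable_funPTI; exact: measurable_itv.
  have mB2 : measurable B2 by apply: measurable_funPTI; exact: measurable_itv.
  have Yi : P.-integrable setT (EFin \o Y).
    apply: (@le_integrable _ _ _ P _ measurableT _ (EFin \o cst (1:R))).
    - by apply/measurable_EFinP.
    - move=> t _ /=; rewrite normr1 lee_fin ger0_norm; case/andP: (Y01 t) => //.
    - exact: finite_measure_integrable_cst.
  have h1 : (P (A `&` B1) <= δ%:E * P B1)%E.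
    apply: (@helper _ _ _ P X Y) => //.
    - exact: measurableI.
    - exact: integrableS Xi.
    - exact: integrableS Yi.
    - move=> t; rewrite /B1 /= in_itv /= => Xt.
      case/andP: (Y01 t) => Y0 Y1.
      rewrite indicE; case: (boolP (t \in _)) => [|_]; last by rewrite addr0; lra.
      rewrite in_setE => -[]; rewrite /A /= ler_normr => /orP[]; lra.
    - by rewrite hXY //; exact: measurable_itv.
  have h2 : (P (A `&` B2) <= δ%:E * P B2)%E.
    apply: (@helper _ _ _ P Y X) => //.
    - exact: measurableI.
    - exact: integrableS Yi.
    - exact: integrableS Xi.
    - move=> t; rewrite /B2 /= in_itv /= andbT => Xt.
      case/andP: (Y01 t) => Y0 Y1.
      rewrite indicE; case: (boolP (t \in _)) => [|_]; last by rewrite addr0; lra.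
      rewrite in_setE => -[]; rewrite /A /= ler_normr => /orP[]; lra.
    - by rewrite hXY //; exact: measurable_itv.
  have AB : A `<=` (A `&` B1) `|` (A `&` B2).
    move=> t At; case/andP: (Y01 t) => Y0 Y1.
    have : (1 - δ <= Y t - X t) || (1 - δ <= - (Y t - X t)) by rewrite -ler_normr.
    case/orP => h.
      by left; split => //; rewrite /B1 /= in_itv /=; lra.
    by right; split => //; rewrite /B2 /= in_itv /= andbT; lra.
  have dis : B1 `&` B2 = set0.
    apply/seteqP; split => t //=; rewrite /B1 /B2 /= !in_itv /= andbT => -[]; lra.
  have mAB1 : measurable (A `&` B1) by exact: measurableI.
  have mAB2 : measurable (A `&` B2) by exact: measurableI.
  apply: (le_trans (le_measure _ _ _ AB)); rewrite ?inE //; first exact: measurableU.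
  apply: (le_trans (measureU2 _ mAB1 mAB2)).
  apply: (le_trans (leeD h1 h2)).
  rewrite -ge0_muleDr // -measureU //.
  rewrite -[X in (_ <= X)%E]mule1; apply: lee_wpmul2l; first by rewrite lee_fin.
  apply: probability_le1; exact: measurableU.
- move=> X Y δ /andP[d0 d12] Xd PY1 PY0.
  have mY1 : measurable [set t | Y t = 1].
    by rewrite (_ : [set t | _] = Y @^-1` [set 1]) //; exact: measurable_funPTI.
  have mY0 : measurable [set t | Y t = 0].
    by rewrite (_ : [set t | _] = Y @^-1` [set 0]) //; exact: measurable_funPTI.
  apply/eqP; rewrite eq_le; apply/andP; split.
  + rewrite (_ : δ%:E = 1 - (1 - δ)%:E)%E; last first.
      by rewrite EFinB oppeB // addeA subee // add0e.
    rewrite -PY0 -probability_setC //.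
    apply: le_measure; rewrite ?inE; [exact: mE|exact: measurableC|].
    move=> t /=; rewrite Xd => + h; rewrite h sub0r normrN ger0_norm //; lra.
  + rewrite -PY1; apply: le_measure; rewrite ?inE; [exact: mY1|exact: mE|].
    move=> t /= ->; rewrite Xd ger0_norm //; lra.
Qed.
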